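(* Let $\alpha\ge0$, $\mu\ge0$. For every uniformly continuous function $g$ on $[0,\infty)$, every $n\in\mathbb{N}$ and every $x\in[0,\infty)$, $$|T_n(g;x)-g(x)|\le\left(1+\sqrt{\frac1n x\left(4x^3\alpha^2+4x\alpha+n\right)+2\mu x\frac{e_\mu(-nx)}{e_\mu(nx)}}\right)\omega\!\left(g;\frac{1}{\sqrt n}\right).$$
   Context: The modulus of continuity is $\omega(g;\delta)=\sup\{|g(s)-g(t)|: s,t\in[0,\infty),\ |s-t|\le\delta\}$. For $\mu>-\tfrac12$ define $\gamma_\mu(2k)=\dfrac{2^{2k}k!\,\Gamma(k+\mu+1/2)}{\Gamma(\mu+1/2)}$ and $\gamma_\mu(2k+1)=\dfrac{2^{2k+1}k!\,\Gamma(k+\mu+3/2)}{\Gamma(\mu+1/2)}$, $k\ge0$; $e_\mu(x)=\sum_{k\ge0} x^k/\gamma_\mu(k)$; $\theta_k=0$ if $k$ is even and $\theta_k=1$ if $k$ is odd. Let $h_k^\mu(\xi,\alpha)=\gamma_\mu(k)\sum_{j=0}^{\lfloor k/2\rfloor}\dfrac{\alpha^j\xi^{k-2j}}{j!\,\gamma_\mu(k-2j)}$. For $\alpha\ge0,\mu\ge0$, $n\in\mathbb{N}$ and $x\in[0,\infty)$ define $$T_n(f;x)=\frac{1}{e^{\alpha x^2}e_\mu(nx)}\sum_{k=0}^\infty \frac{h_k^\mu(n,\alpha)}{\gamma_\mu(k)}x^k f\!\left(\frac{k+2\mu\theta_k}{n}\right).$$ *)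

(* Defs.v *)
From Stdlib Require Import Reals Lra.
From Coquelicot Require Import Coquelicot.
Open Scope R_scope.

(* Rising factorial: poch a m = a (a+1) ... (a+m-1) = Gamma(a+m)/Gamma(a). *)
Fixpoint poch (a : R) (m : nat) : R :=
  match m with
  | O => 1
  | S m' => poch a m' * (a + INR m')
  end.

(* gamma_mu(2k)   = 2^{2k} k! Gamma(k+mu+1/2)/Gamma(mu+1/2)
   gamma_mu(2k+1) = 2^{2k+1} k! Gamma(k+mu+3/2)/Gamma(mu+1/2) *)
Definition gamma_mu (mu : R) (k : nat) : R :=
  if Nat.even k
  then 2 ^ k * INR (Factorial.fact (Nat.div2 k)) * poch (mu + /2) (Nat.div2 k)
  else 2 ^ k * INR (Factorial.fact (Nat.div2 k)) * poch (mu + /2) (S (Nat.div2 k)).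

Definition e_mu (mu x : R) : R := Series (fun k => x ^ k / gamma_mu mu k).

Definition theta (k : nat) : R := if Nat.even k then 0 else 1.

Definition h_mu (mu : R) (k : nat) (xi alpha : R) : R :=
  gamma_mu mu k *
  sum_f_R0 (fun j => alpha ^ j * xi ^ (k - 2 * j) /
                     (INR (Factorial.fact j) * gamma_mu mu (k - 2 * j))) (Nat.div2 k).

Definition T_op (alpha mu : R) (n : nat) (f : R -> R) (x : R) : R :=
  / (exp (alpha * x ^ 2) * e_mu mu (INR n * x)) *
  Series (fun k => h_mu mu k (INR n) alpha / gamma_mu mu k * x ^ k *
                   f ((INR k + 2 * mu * theta k) / INR n)).

Definition omega (g : R -> R) (delta : R) : Rbar :=
  Lub_Rbar (fun y => exists s t, 0 <= s /\ 0 <= t /\ Rabs (s - t) <= delta /\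
                                 y = Rabs (g s - g t)).

Definition unif_cont_nonneg (g : R -> R) : Prop :=
  forall eps, 0 < eps -> exists delta, 0 < delta /\
    forall s t, 0 <= s -> 0 <= t -> Rabs (s - t) < delta -> Rabs (g s - g t) < eps.

(* Main.v *)
Require Import Defs.
From Stdlib Require Import Reals Lra Lia.
From Coquelicot Require Import Coquelicot.
Open Scope R_scope.

Lemma poch_pos a m : 0 < a -> 0 < poch a m.
Proof. intros Ha; induction m; simpl. lra. apply Rmult_lt_0_compat; auto. pose proof (pos_INR m); lra. Qed.

Lemma even2 d : Nat.even (2*d) = true. Proof. apply Nat.even_even. Qed.
Lemma even2S d : Nat.even (S (2*d)) = false.
Proof. replace (S (2*d)) with (2*d+1)%nat by lia. apply Nat.even_odd. Qed.

Definition cp (mu : R) (k : nat) := INR k + 2 * mu * theta k.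

Lemma gamma_S mu m : gamma_mu mu (S m) = gamma_mu mu m * cp mu (S m).
Proof.
  unfold cp, gamma_mu, theta.
  destruct (Nat.Even_or_Odd m) as [[d ->]|[d ->]].
  - rewrite even2S, even2, Nat.div2_succ_double, Nat.div2_double.
    simpl poch. rewrite S_INR, mult_INR. simpl (INR 2).
    replace (S (2*d)) with (2*d+1)%nat by lia. rewrite pow_add. field.
  - replace (S (2*d+1)) with (2*(S d))%nat by lia.
    replace (2*d+1)%nat with (S (2*d)) by lia.
    rewrite even2S, even2, Nat.div2_succ_double, Nat.div2_double.
    replace (2 * S d)%nat with (S (2*d) + 1)%nat by lia.
    rewrite pow_add. simpl poch. rewrite fact_simpl, mult_INR. replace (S (2*d) + 1)%nat with (S (S (2*d))) by lia. rewrite !S_INR, mult_INR. simpl (INR 2). field.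
Qed.

Lemma theta_01 k : 0 <= theta k <= 1.
Proof. unfold theta; destruct (Nat.even k); lra. Qed.

Lemma cp_ge mu k : 0 <= mu -> INR k <= cp mu k.
Proof. intros; unfold cp; pose proof (theta_01 k); nra. Qed.

Lemma gamma_pos mu k : 0 <= mu -> 0 < gamma_mu mu k.
Proof.
  intros Hmu; induction k.
  - unfold gamma_mu; simpl. lra.
  - rewrite gamma_S. apply Rmult_lt_0_compat; auto.
    pose proof (cp_ge mu (S k) Hmu). rewrite S_INR in H. pose proof (pos_INR k); lra.
Qed.

Lemma gamma_ge_fact mu k : 0 <= mu -> INR (Factorial.fact k) <= gamma_mu mu k.
Proof.
  intros Hmu; induction k.
  - unfold gamma_mu; simpl. lra.
  - rewrite gamma_S, fact_simpl, mult_INR, Rmult_comm.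
    apply Rmult_le_compat; auto. apply pos_INR. apply pos_INR. apply cp_ge; auto.
Qed.

Lemma e_mu_ex mu y : 0 <= mu -> ex_series (fun k => y ^ k / gamma_mu mu k).
Proof.
  intros Hmu.
  apply (@ex_series_le R_AbsRing R_CompleteNormedModule) with (fun k => Rabs y ^ k / INR (Factorial.fact k)).
  - intros k. change norm with Rabs; simpl.
    unfold Rdiv. rewrite Rabs_mult, <- RPow_abs, Rabs_inv.
    rewrite (Rabs_pos_eq (gamma_mu mu k)) by (left; apply gamma_pos; auto).
    apply Rmult_le_compat_l. apply pow_le, Rabs_pos.
    apply Rinv_le_contravar. apply INR_fact_lt_0. apply gamma_ge_fact; auto.
  - exists (exp (Rabs y)). pose proof (is_exp_Reals (Rabs y)) as H.
    eapply is_series_ext; [|exact H]. intros k. simpl. rewrite pow_n_pow. change (scal (Rabs y ^ k) (/ INR (Factorial.fact k)) = Rabs y ^ k / INR (Factorial.fact k)). reflexivity.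
Qed.

Lemma e_mu_is mu y : 0 <= mu -> is_series (fun k => y ^ k / gamma_mu mu k) (e_mu mu y).
Proof. intros; apply Series_correct, e_mu_ex; auto. Qed.

Lemma is_series_ge0 (a : nat -> R) (l : R) : is_series a l -> (forall k, 0 <= a k) -> a O <= l.
Proof.
  intros H Hp. rewrite <- (is_series_unique _ _ H).
  rewrite Series_incr_1 by (exists l; auto).
  assert (0 <= Series (fun k => a (S k))).
  { assert (Hz: Series (fun _ : nat => 0) = 0).
    { rewrite (Series_ext _ (fun n => 0 * 0)) by (intros; ring). rewrite Series_scal_l. ring. }
    rewrite <- Hz. apply Series_le.
    intros; split; [lra| apply Hp]. apply (proj1 (ex_series_incr_1 a)). exists l; exact H. }
  lra.
Qed.

Lemma shift1 (a : nat -> R) (l : R) : is_series a l -> is_series (fun k => match k with O => 0 | S k' => a k' end) l.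
Proof.
  intros H. apply is_series_decr_1. simpl. 
  match goal with |- is_series _ ?L => replace L with l end. exact H.
  change (l = Rplus l (Ropp 0)). rewrite Ropp_0, Rplus_0_r. reflexivity.
Qed.

Definition Pu (u : R) (i : nat) : R :=
  if Nat.even i then u ^ (Nat.div2 i) / INR (Factorial.fact (Nat.div2 i)) else 0.
Definition Bs (mu y : R) (m : nat) : R := y ^ m / gamma_mu mu m.

Lemma is_series_zero : is_series (fun _ : nat => 0) 0.
Proof.
  pose proof (is_series_scal_l 0 _ _ (is_exp_Reals 0)) as H.
  eapply is_series_ext; [|match goal with |- is_series _ ?L => replace L with (scal 0 (exp 0)) end; [exact H|]].
  intros; simpl. change (Rmult 0 (scal (pow_n 0 n) (/ INR (Factorial.fact n))) = 0). ring.
  change (Rmult 0 (exp 0) = 0). ring.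
Qed.

Lemma Pu_is u : is_series (Pu u) (exp u).
Proof.
  assert (H : is_pseries (Pu u) 1 (exp u + 1 * 0)).
  { apply is_pseries_odd_even.
    - pose proof (is_exp_Reals u) as H. unfold is_pseries in *.
      eapply is_series_ext; [|exact H]. intros k. 
      change (scal (pow_n u k) (/ INR (Factorial.fact k)) = scal (pow_n (1^2) k) (Pu u (2*k)%nat)).
      unfold Pu. rewrite Nat.even_even, Nat.div2_double, !pow_n_pow, pow1, pow1.
      change (u ^ k * / INR (Factorial.fact k) = 1 * (u ^ k / INR (Factorial.fact k))). unfold Rdiv. ring.
    - unfold is_pseries. eapply is_series_ext; [|exact is_series_zero].
      intros k. change (0 = scal (pow_n (1^2) k) (Pu u (2*k+1)%nat)). unfold Pu. rewrite Nat.even_odd.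
      change (0 = pow_n (1^2) k * 0). ring. }
  unfold is_pseries in H. rewrite Rmult_0_r, Rplus_0_r in H.
  eapply is_series_ext; [|exact H]. intros k. simpl. rewrite pow_n_pow, pow1.
  change (1 * Pu u k = Pu u k). ring.
Qed.

Lemma Pu_ge0 u i : 0 <= u -> 0 <= Pu u i.
Proof.
  intros; unfold Pu; destruct (Nat.even i); [|lra].
  apply Rcomplements.Rdiv_le_0_compat. apply pow_le; auto. apply INR_fact_lt_0.
Qed.

Lemma Pu_mom u i : INR i * Pu u i = match i with O | S O => 0 | S (S j) => 2 * u * Pu u j end.
Proof.
  destruct i as [|[|j]].
  - simpl; ring.
  - unfold Pu; simpl; ring.
  - unfold Pu. replace (Nat.even (S (S j))) with (Nat.even j) by reflexivity.
    replace (Nat.div2 (S (S j))) with (S (Nat.div2 j)) by reflexivity.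
    destruct (Nat.Even_or_Odd j) as [[d ->]|[d ->]].
    + rewrite Nat.even_even, Nat.div2_double. rewrite fact_simpl, mult_INR, !S_INR, mult_INR.
      simpl (INR 2). simpl pow. field. split. apply INR_fact_neq_0. pose proof (pos_INR d); lra.
    + rewrite Nat.even_odd. ring.
Qed.

Lemma shift2 (a : nat -> R) (l : R) : is_series a l ->
  is_series (fun k => match k with O | S O => 0 | S (S j) => a j end) l.
Proof.
  intros H. apply shift1 in H. apply shift1 in H.
  eapply is_series_ext; [|exact H]. intros [|[|j]]; reflexivity.
Qed.

Lemma Pu_is1 u : is_series (fun i => INR i * Pu u i) (2 * u * exp u).
Proof.
  pose proof (shift2 _ _ (is_series_scal_l (2*u) _ _ (Pu_is u))) as H.
  eapply is_series_ext; [|exact H]. intros k. rewrite Pu_mom. destruct k as [|[|j]]; reflexivity.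
Qed.

Lemma Pu_is2 u : is_series (fun i => INR i ^ 2 * Pu u i) (2 * u * (2 * u * exp u + 2 * exp u)).
Proof.
  pose proof (shift2 _ _ (is_series_scal_l (2*u) _ _
     (is_series_plus _ _ _ _ (Pu_is1 u) (is_series_scal_l 2 _ _ (Pu_is u))))) as H.
  eapply is_series_ext; [|exact H]. intros k.
  replace (INR k ^ 2 * Pu u k) with (INR k * (INR k * Pu u k)) by ring.
  rewrite Pu_mom. destruct k as [|[|j]]; try (simpl; ring).
  change (scal (2 * u) (plus (INR j * Pu u j) (scal 2 (Pu u j))) = INR (S (S j)) * (2 * u * Pu u j)).
  rewrite !S_INR. change ((2*u) * ((INR j * Pu u j) + 2 * Pu u j) = (INR j + 1 + 1) * (2 * u * Pu u j)). ring.
Qed.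

Lemma Bs_is mu y : 0 <= mu -> is_series (Bs mu y) (e_mu mu y).
Proof. intros; apply e_mu_is; auto. Qed.

Lemma Bs_ge0 mu y m : 0 <= mu -> 0 <= y -> 0 <= Bs mu y m.
Proof. intros; unfold Bs. apply Rcomplements.Rdiv_le_0_compat. apply pow_le; auto. apply gamma_pos; auto. Qed.

Lemma cp0 mu : cp mu 0 = 0.
Proof. unfold cp, theta; simpl; ring. Qed.

Lemma Bs_mom mu y m : 0 <= mu -> cp mu m * Bs mu y m = match m with O => 0 | S m' => y * Bs mu y m' end.
Proof.
  intros Hmu. destruct m as [|m'].
  - rewrite cp0; ring.
  - unfold Bs. rewrite gamma_S. simpl pow. field.
    pose proof (gamma_pos mu m' Hmu). pose proof (cp_ge mu (S m') Hmu). rewrite S_INR in H0.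
    pose proof (pos_INR m'). split; lra.
Qed.

Lemma cp_S mu m : cp mu (S m) = cp mu m + 1 + 2 * mu * (-1) ^ m.
Proof.
  unfold cp, theta. rewrite S_INR.
  destruct (Nat.Even_or_Odd m) as [[d ->]|[d ->]].
  - rewrite even2, even2S, pow_1_even. ring.
  - replace (S (2*d+1)) with (2 * S d)%nat by lia. rewrite Nat.even_even, Nat.even_odd.
    replace (2*d+1)%nat with (S (2*d)) by lia. rewrite pow_1_odd. ring.
Qed.

Lemma neg_pow y m : (- y) ^ m = (-1) ^ m * y ^ m.
Proof. induction m; simpl. ring. rewrite IHm. ring. Qed.

Lemma Bs_is1 mu y : 0 <= mu -> is_series (fun m => cp mu m * Bs mu y m) (y * e_mu mu y).
Proof.
  intros Hmu. pose proof (shift1 _ _ (is_series_scal_l y _ _ (Bs_is mu y Hmu))) as H.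
  eapply is_series_ext; [|exact H]. intros k. rewrite Bs_mom by auto. destruct k; reflexivity.
Qed.

Lemma Bs_is2 mu y : 0 <= mu -> is_series (fun m => cp mu m ^ 2 * Bs mu y m)
   (y * (y * e_mu mu y + e_mu mu y + 2 * mu * e_mu mu (- y))).
Proof.
  intros Hmu.
  assert (Hm : is_series (fun m => (-1) ^ m * Bs mu y m) (e_mu mu (- y))).
  { eapply is_series_ext; [|exact (e_mu_is mu (- y) Hmu)]. intros k. change ((- y) ^ k / gamma_mu mu k = (-1) ^ k * (y ^ k / gamma_mu mu k)). rewrite neg_pow. unfold Rdiv; ring. }
  pose proof (shift1 _ _ (is_series_scal_l y _ _
     (is_series_plus _ _ _ _ (is_series_plus _ _ _ _ (Bs_is1 mu y Hmu) (Bs_is mu y Hmu))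
        (is_series_scal_l (2 * mu) _ _ Hm)))) as H.
  eapply is_series_ext; [|exact H]. intros k.
  replace (cp mu k ^ 2 * Bs mu y k) with (cp mu k * (cp mu k * Bs mu y k)) by ring.
  rewrite Bs_mom by auto. destruct k as [|k]. simpl; ring.
  rewrite cp_S.
  change (y * ((cp mu k * Bs mu y k + Bs mu y k) + 2 * mu * ((-1) ^ k * Bs mu y k)) =
    (cp mu k + 1 + 2 * mu * (-1) ^ k) * (y * Bs mu y k)). ring.
Qed.

Definition W (u mu y : R) (k : nat) : R := sum_f_R0 (fun i => Pu u i * Bs mu y (k - i)) k.

Lemma sum_even (f : nat -> R) N :
  sum_f_R0 (fun i => if Nat.even i then f i else 0) N = sum_f_R0 (fun j => f (2*j)%nat) (Nat.div2 N).
Proof.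
  assert (forall m, sum_f_R0 (fun i => if Nat.even i then f i else 0) (2*m) = sum_f_R0 (fun j => f (2*j)%nat) m /\
                    sum_f_R0 (fun i => if Nat.even i then f i else 0) (S (2*m)) = sum_f_R0 (fun j => f (2*j)%nat) m).
  { induction m.
    - simpl. split; ring.
    - destruct IHm as [H1 H2].
      replace (2 * S m)%nat with (S (S (2*m))) by lia.
      assert (E1 : sum_f_R0 (fun i => if Nat.even i then f i else 0) (S (S (2*m))) = sum_f_R0 (fun j => f (2*j)%nat) (S m)).
      { rewrite tech5, H2, tech5. replace (S (S (2*m))) with (2 * S m)%nat by lia. rewrite Nat.even_even. reflexivity. }
      split; auto. rewrite tech5, E1. replace (S (S (S (2*m)))) with (2 * S m + 1)%nat by lia.
      rewrite Nat.even_odd. ring. }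
  destruct (Nat.Even_or_Odd N) as [[d ->]|[d ->]].
  - rewrite Nat.div2_double. apply H.
  - replace (2*d+1)%nat with (S (2*d)) by lia. rewrite Nat.div2_succ_double. apply H.
Qed.

Lemma W_eq mu alpha n x k : 0 <= mu ->
  h_mu mu k (INR n) alpha / gamma_mu mu k * x ^ k = W (alpha * x ^ 2) mu (INR n * x) k.
Proof.
  intros Hmu. pose proof (gamma_pos mu k Hmu) as Hg.
  unfold h_mu, W.
  replace (gamma_mu mu k * sum_f_R0 (fun j => alpha ^ j * INR n ^ (k - 2 * j) /
        (INR (Factorial.fact j) * gamma_mu mu (k - 2 * j))) (Nat.div2 k) / gamma_mu mu k * x ^ k)
    with (x ^ k * sum_f_R0 (fun j => alpha ^ j * INR n ^ (k - 2 * j) /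
        (INR (Factorial.fact j) * gamma_mu mu (k - 2 * j))) (Nat.div2 k)) by (field; lra).
  rewrite scal_sum.
  rewrite (sum_eq (fun i => Pu (alpha * x ^ 2) i * Bs mu (INR n * x) (k - i)) (fun i => if Nat.even i then
      (alpha * x^2) ^ (Nat.div2 i) / INR (Factorial.fact (Nat.div2 i)) * Bs mu (INR n * x) (k - i) else 0)).
  2:{ intros i _. unfold Pu. destruct (Nat.even i); ring. }
  rewrite sum_even. apply sum_eq. intros j Hj.
  assert (H2 : (2 * j <= k)%nat). { pose proof (Nat.div2_odd k). destruct (Nat.odd k); simpl in *; lia. }
  rewrite Nat.div2_double. unfold Bs.
  assert (Ex : x ^ k = x ^ (2*j) * x ^ (k - 2*j)) by (rewrite <- pow_add; f_equal; lia).
  rewrite Ex, !Rpow_mult_distr, pow_mult.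
  pose proof (INR_fact_neq_0 j). pose proof (gamma_pos mu (k - 2*j) Hmu).
  field. split; lra.
Qed.

Lemma W_ge0 u mu y k : 0 <= mu -> 0 <= u -> 0 <= y -> 0 <= W u mu y k.
Proof.
  intros. unfold W. apply cond_pos_sum. intros i. apply Rmult_le_pos. apply Pu_ge0; auto. apply Bs_ge0; auto.
Qed.

Lemma cp_split mu i k : (i <= k)%nat -> Nat.even i = true -> cp mu k = INR i + cp mu (k - i).
Proof.
  intros Hik He. apply Nat.even_spec in He. destruct He as [d ->].
  unfold cp, theta.
  replace k with ((k - 2*d) + 2*d)%nat at 1 2 by lia. rewrite plus_INR, Nat.even_add_mul_2. ring.
Qed.

Lemma term1 u mu y i k : (i <= k)%nat ->
  Pu u i * Bs mu y (k - i) * cp mu k =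
  (INR i * Pu u i) * Bs mu y (k - i) + Pu u i * (cp mu (k - i) * Bs mu y (k - i)).
Proof.
  intros Hik. destruct (Nat.even i) eqn:He.
  - rewrite (cp_split mu i k Hik He). ring.
  - unfold Pu. rewrite He. ring.
Qed.

Lemma term2 u mu y i k : (i <= k)%nat ->
  Pu u i * Bs mu y (k - i) * cp mu k ^ 2 =
  (INR i ^ 2 * Pu u i) * Bs mu y (k - i) + 2 * ((INR i * Pu u i) * (cp mu (k - i) * Bs mu y (k - i)))
  + Pu u i * (cp mu (k - i) ^ 2 * Bs mu y (k - i)).
Proof.
  intros Hik. destruct (Nat.even i) eqn:He.
  - rewrite (cp_split mu i k Hik He). ring.
  - unfold Pu. rewrite He. ring.
Qed.


Lemma W_is0 (u mu y : R) (Hmu : 0 <= mu) (Hu : 0 <= u) (Hy : 0 <= y) : is_series (W u mu y) (exp u * e_mu mu y).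
Proof.
  apply is_series_mult_pos. apply Pu_is. apply Bs_is; auto.
  intros; apply Pu_ge0; auto. intros; apply Bs_ge0; auto.
Qed.

Lemma iP_ge0 (u mu y : R) (Hmu : 0 <= mu) (Hu : 0 <= u) (Hy : 0 <= y) i : 0 <= INR i * Pu u i.
Proof. apply Rmult_le_pos. apply pos_INR. apply Pu_ge0; auto. Qed.
Lemma i2P_ge0 (u mu y : R) (Hmu : 0 <= mu) (Hu : 0 <= u) (Hy : 0 <= y) i : 0 <= INR i ^ 2 * Pu u i.
Proof. apply Rmult_le_pos. apply pow_le, pos_INR. apply Pu_ge0; auto. Qed.
Lemma cB_ge0 (u mu y : R) (Hmu : 0 <= mu) (Hu : 0 <= u) (Hy : 0 <= y) i : 0 <= cp mu i * Bs mu y i.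
Proof. apply Rmult_le_pos. pose proof (cp_ge mu i Hmu); pose proof (pos_INR i); lra. apply Bs_ge0; auto. Qed.
Lemma c2B_ge0 (u mu y : R) (Hmu : 0 <= mu) (Hu : 0 <= u) (Hy : 0 <= y) i : 0 <= cp mu i ^ 2 * Bs mu y i.
Proof. apply Rmult_le_pos. apply pow2_ge_0. apply Bs_ge0; auto. Qed.

Lemma W_is1 (u mu y : R) (Hmu : 0 <= mu) (Hu : 0 <= u) (Hy : 0 <= y) : is_series (fun k => W u mu y k * cp mu k)
   (2 * u * exp u * e_mu mu y + exp u * (y * e_mu mu y)).
Proof.
  pose proof (is_series_mult_pos _ _ _ _ (Pu_is1 u) (Bs_is mu y Hmu) (iP_ge0 u mu y Hmu Hu Hy) (fun i => Bs_ge0 mu y i Hmu Hy)) as H1.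
  pose proof (is_series_mult_pos _ _ _ _ (Pu_is u) (Bs_is1 mu y Hmu) (fun i => Pu_ge0 u i Hu) (cB_ge0 u mu y Hmu Hu Hy)) as H2.
  pose proof (is_series_plus _ _ _ _ H1 H2) as H.
  eapply is_series_ext; [|exact H]. intros k.
  change (sum_f_R0 (fun i => INR i * Pu u i * Bs mu y (k - i)) k + sum_f_R0 (fun i => Pu u i * (cp mu (k - i) * Bs mu y (k - i))) k
     = W u mu y k * cp mu k).
  unfold W. rewrite Rmult_comm, scal_sum, <- plus_sum. apply sum_eq. intros i Hi.
  rewrite term1 by auto. reflexivity.
Qed.

Lemma W_is2 (u mu y : R) (Hmu : 0 <= mu) (Hu : 0 <= u) (Hy : 0 <= y) : is_series (fun k => W u mu y k * cp mu k ^ 2)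
   (2 * u * (2 * u * exp u + 2 * exp u) * e_mu mu y + 2 * (2 * u * exp u * (y * e_mu mu y))
    + exp u * (y * (y * e_mu mu y + e_mu mu y + 2 * mu * e_mu mu (- y)))).
Proof.
  pose proof (is_series_mult_pos _ _ _ _ (Pu_is2 u) (Bs_is mu y Hmu) (i2P_ge0 u mu y Hmu Hu Hy) (fun i => Bs_ge0 mu y i Hmu Hy)) as H1.
  pose proof (is_series_mult_pos _ _ _ _ (Pu_is1 u) (Bs_is1 mu y Hmu) (iP_ge0 u mu y Hmu Hu Hy) (cB_ge0 u mu y Hmu Hu Hy)) as H2.
  pose proof (is_series_mult_pos _ _ _ _ (Pu_is u) (Bs_is2 mu y Hmu) (fun i => Pu_ge0 u i Hu) (c2B_ge0 u mu y Hmu Hu Hy)) as H3.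
  pose proof (is_series_plus _ _ _ _ (is_series_plus _ _ _ _ H1 (is_series_scal_l 2 _ _ H2)) H3) as H.
  eapply is_series_ext; [|exact H]. intros k.
  change (sum_f_R0 (fun i => INR i ^ 2 * Pu u i * Bs mu y (k - i)) k
     + 2 * sum_f_R0 (fun i => INR i * Pu u i * (cp mu (k - i) * Bs mu y (k - i))) k
     + sum_f_R0 (fun i => Pu u i * (cp mu (k - i) ^ 2 * Bs mu y (k - i))) k
     = W u mu y k * cp mu k ^ 2).
  unfold W. rewrite (Rmult_comm _ (cp mu k ^ 2)), !scal_sum, <- !plus_sum. apply sum_eq. intros i Hi.
  rewrite term2 by auto. ring.
Qed.

Lemma chain (g : R -> R) eta K : 0 < eta ->
  (forall s t, 0 <= s -> 0 <= t -> Rabs (s - t) <= eta -> Rabs (g s - g t) <= K) ->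
  forall s t, 0 <= s -> 0 <= t -> Rabs (g s - g t) <= (1 + Rabs (s - t) / eta) * K.
Proof.
  intros He HK.
  assert (K0 : 0 <= K). { specialize (HK 0 0). rewrite Rminus_0_r, Rabs_R0 in HK.
    pose proof (Rabs_pos (g 0 - g 0)). pose proof (HK (Rle_refl 0) (Rle_refl 0) (Rlt_le _ _ He)). lra. }
  assert (Hd : forall a, 0 <= a -> 0 <= a / eta).
  { intros; apply Rcomplements.Rdiv_le_0_compat; lra. }
  assert (Main : forall N : nat, forall s t, 0 <= t -> t <= s -> s - t <= INR N * eta ->
             Rabs (g s - g t) <= (1 + (s - t) / eta) * K).
  { induction N; intros s t Ht Hts Hn.
    - simpl in Hn. replace s with t by lra. rewrite Rminus_diag, Rabs_R0. unfold Rdiv; rewrite Rminus_diag, Rmult_0_l.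
      lra.
    - destruct (Rle_lt_dec (s - t) eta) as [Hle|Hlt].
      + eapply Rle_trans. apply HK; try lra. rewrite Rabs_pos_eq; lra.
        pose proof (Hd (s - t) ltac:(lra)). nra.
      + rewrite S_INR in Hn.
        specialize (IHN s (t + eta) ltac:(lra) ltac:(lra) ltac:(lra)).
        assert (H2 : Rabs (g (t + eta) - g t) <= K) by (apply HK; try lra; rewrite Rabs_pos_eq; lra).
        replace (g s - g t) with ((g s - g (t + eta)) + (g (t + eta) - g t)) by ring.
        eapply Rle_trans. apply Rabs_triang.
        replace ((1 + (s - t) / eta) * K) with ((1 + (s - (t + eta)) / eta) * K + K) by (field; lra).
        lra. }
  intros s t Hs Ht.
  destruct (Rcomplements.nfloor_ex (Rabs (s - t) / eta) (Hd _ (Rabs_pos _))) as [N [_ HN]].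
  assert (HN' : Rabs (s - t) <= INR (S N) * eta).
  { rewrite S_INR. apply Rmult_lt_compat_r with (r := eta) in HN; auto.
    unfold Rdiv in HN. rewrite Rmult_assoc, Rinv_l, Rmult_1_r in HN; lra. }
  destruct (Rle_dec t s) as [Hts|Hts].
  - rewrite (Rabs_pos_eq (s - t)) in * by lra. apply (Main (S N)); auto.
  - rewrite Rabs_minus_sym, (Rabs_minus_sym s t). rewrite Rabs_minus_sym in HN'.
    rewrite (Rabs_pos_eq (t - s)) in * by lra. apply (Main (S N)); auto; lra.
Qed.

Lemma omega_fin g delta : unif_cont_nonneg g -> 0 < delta ->
  exists w, omega g delta = Finite w /\ 0 <= w /\
    forall s t, 0 <= s -> 0 <= t -> Rabs (s - t) <= delta -> Rabs (g s - g t) <= w.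
Proof.
  intros Hu Hd.
  destruct (Hu 1 ltac:(lra)) as [d0 [Hd0 Hc]].
  pose proof (chain g (d0/2) 1 ltac:(lra)) as Hch.
  assert (Hb : forall s t, 0 <= s -> 0 <= t -> Rabs (s - t) <= delta -> Rabs (g s - g t) <= (1 + delta / (d0/2)) * 1).
  { intros s t Hs Ht Hst. eapply Rle_trans. apply Hch; auto.
    intros a b Ha Hb' Hab. left. apply Hc; auto; lra.
    apply Rmult_le_compat_r. lra. apply Rplus_le_compat_l. unfold Rdiv. apply Rmult_le_compat_r; auto.
    left; apply Rinv_0_lt_compat; lra. }
  unfold omega.
  destruct (Lub_Rbar_correct (fun y => exists s t, 0 <= s /\ 0 <= t /\ Rabs (s - t) <= delta /\
                                 y = Rabs (g s - g t))) as [Hub Hlub].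
  assert (E0 : (fun y => exists s t, 0 <= s /\ 0 <= t /\ Rabs (s - t) <= delta /\ y = Rabs (g s - g t)) 0).
  { exists 0, 0. rewrite Rminus_0_r, Rabs_R0, Rminus_diag, Rabs_R0. repeat split; lra. }
  destruct (Lub_Rbar _) as [w| |] eqn:Hw.
  - exists w. split; auto. split.
    + apply (Hub 0 E0).
    + intros s t Hs Ht Hst. apply (Hub (Rabs (g s - g t))). exists s, t; repeat split; auto.
  - exfalso. refine (Hlub (Finite ((1 + delta / (d0/2)) * 1)) _).
    intros y [s [t [Hs [Ht [Hst ->]]]]]. simpl. apply Hb; auto.
  - exfalso. apply (Hub 0 E0).
Qed.

Lemma is_series_plusR (a b : nat -> R) la lb : is_series a la -> is_series b lb ->
  is_series (fun n => a n + b n) (la + lb).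
Proof. intros H1 H2. exact (is_series_plus a b la lb H1 H2). Qed.
Lemma is_series_scalR (a : nat -> R) c l : is_series a l -> is_series (fun n => c * a n) (c * l).
Proof. intros H. exact (is_series_scal_l c a l H). Qed.
Lemma is_series_extR (a b : nat -> R) l l' : is_series a l -> (forall k, a k = b k) -> l = l' -> is_series b l'.
Proof. intros H He E. subst l'. exact (is_series_ext a b l He H). Qed.

Lemma abs_amgm a s : 0 < s -> Rabs a <= (a ^ 2 / s + s) / 2.
Proof.
  intros Hs. assert (H : 0 <= (Rabs a - s) ^ 2) by apply pow2_ge_0.
  assert (Ha : Rabs a ^ 2 = a ^ 2) by (destruct (Rle_dec 0 a); [rewrite Rabs_pos_eq by lra | rewrite Rabs_left by lra]; ring).
  apply Rmult_le_reg_r with (2 * s). lra.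
  replace ((a ^ 2 / s + s) / 2 * (2 * s)) with (a ^ 2 + s ^ 2) by (field; lra). nra.
Qed.

Lemma bound_s L w d V : 0 <= w -> 0 < d -> 0 <= V ->
  (forall s, 0 < s -> L <= w * (1 + s / (2 * d)) + w * V / (2 * d * s)) ->
  L <= (1 + sqrt V / d) * w.
Proof.
  intros Hw Hd HV H.
  destruct HV as [HV| <-].
  - pose proof (sqrt_lt_R0 V HV) as Hs. specialize (H (sqrt V) Hs).
    replace ((1 + sqrt V / d) * w) with (w * (1 + sqrt V / (2 * d)) + w * (sqrt V * sqrt V) / (2 * d * sqrt V)) by (field; lra).
    rewrite sqrt_sqrt by lra. exact H.
  - rewrite sqrt_0. replace ((1 + 0 / d) * w) with w by (field; lra).
    destruct (Rle_dec L w) as [|Hn]; auto. exfalso.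
    assert (Hs : 0 < d * (L - w) / (w + 1)). { apply Rdiv_lt_0_compat; nra. }
    specialize (H _ Hs).
    assert (w * (1 + d * (L - w) / (w + 1) / (2 * d)) + w * 0 / (2 * d * (d * (L - w) / (w + 1)))
          = w + w * (L - w) / (2 * (w + 1))) by (field; split; lra).
    rewrite H0 in H.
    assert (w * (L - w) / (2 * (w + 1)) < L - w).
    { apply Rmult_lt_reg_r with (2 * (w + 1)). lra.
      replace (w * (L - w) / (2 * (w + 1)) * (2 * (w + 1))) with (w * (L - w)) by (field; lra). nra. }
    lra.
Qed.

Lemma main_ineq (Wk z : nat -> R) (g : R -> R) (x F S1 S2 w d : R) :
  (forall k, 0 <= Wk k) -> (forall k, 0 <= z k) -> 0 <= x -> 0 < F -> 0 < d -> 0 <= w ->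
  is_series Wk F -> is_series (fun k => Wk k * z k) S1 -> is_series (fun k => Wk k * z k ^ 2) S2 ->
  (forall s t, 0 <= s -> 0 <= t -> Rabs (g s - g t) <= (1 + Rabs (s - t) / d) * w) ->
  Rabs (/ F * Series (fun k => Wk k * g (z k)) - g x) <=
  (1 + sqrt ((S2 - 2 * x * S1 + x ^ 2 * F) / F) / d) * w.
Proof.
  intros HW Hz Hx HF Hd Hw H0 H1 H2 Hg.
  set (Q := S2 - 2 * x * S1 + x ^ 2 * F).
  assert (HQ : is_series (fun k => Wk k * (z k - x) ^ 2) Q).
  { eapply is_series_extR.
    apply (is_series_plusR _ _ _ _ (is_series_plusR _ _ _ _ H2 (is_series_scalR _ (- 2 * x) _ H1)) (is_series_scalR _ (x ^ 2) _ H0)).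
    intros k; cbv beta; ring. unfold Q; match goal with |- ?A = ?B => change (@eq R A B) end; ring. }
  assert (Q0 : 0 <= Q).
  { pose proof (is_series_ge0 _ _ HQ). assert (0 <= Wk 0%nat * (z 0%nat - x) ^ 2) by (apply Rmult_le_pos; auto; apply pow2_ge_0). 
    apply Rle_trans with (Wk 0%nat * (z 0%nat - x) ^ 2); auto. apply H. intros; apply Rmult_le_pos; auto; apply pow2_ge_0. }
  assert (Hgr : forall t, 0 <= t -> Rabs (g t) <= Rabs (g 0) + w + w / d * t).
  { intros t Ht. specialize (Hg t 0 Ht (Rle_refl 0)). rewrite (Rminus_0_r t), (Rabs_pos_eq t) in Hg by lra.
    pose proof (Rabs_triang_inv (g t) (g 0)).
    replace (Rabs (g 0) + w + w / d * t) with (Rabs (g 0) + (1 + t / d) * w) by (field; lra). lra. }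
  assert (Hex : ex_series (fun k => Wk k * g (z k))).
  { apply (@ex_series_le R_AbsRing R_CompleteNormedModule) with (fun k => (Rabs (g 0) + w) * Wk k + w / d * (Wk k * z k)).
    - intros k. change norm with Rabs. simpl. rewrite Rabs_mult, (Rabs_pos_eq (Wk k)) by auto.
      specialize (Hgr (z k) (Hz k)). specialize (HW k). 
      replace ((Rabs (g 0) + w) * Wk k + w / d * (Wk k * z k)) with (Wk k * (Rabs (g 0) + w + w / d * z k)) by ring.
      apply Rmult_le_compat_l; auto.
    - eexists. apply (is_series_plusR _ _ _ _ (is_series_scalR _ _ _ H0) (is_series_scalR _ _ _ H1)). }
  set (D := fun k => Wk k * (g (z k) - g x)).
  assert (HD : Series D = Series (fun k => Wk k * g (z k)) - g x * F).
  { unfold D. rewrite <- (is_series_unique _ _ H0), <- Series_scal_l, <- Series_minus; auto.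
    apply Series_ext; intros; ring. eexists. apply is_series_scalR. exact H0. }
  replace (/ F * Series (fun k => Wk k * g (z k)) - g x) with (/ F * Series D) by (rewrite HD; field; lra).
  rewrite Rabs_mult, Rabs_inv, (Rabs_pos_eq F) by lra.
  apply bound_s; auto.
  { apply Rcomplements.Rdiv_le_0_compat; auto. }
  intros s Hs.
  set (v := fun k => w * (1 + s / (2 * d)) * Wk k + w / (2 * d * s) * (Wk k * (z k - x) ^ 2)).
  assert (Hv : is_series v (w * (1 + s / (2 * d)) * F + w / (2 * d * s) * Q)).
  { apply (is_series_plusR _ _ _ _ (is_series_scalR _ _ _ H0) (is_series_scalR _ _ _ HQ)). }
  assert (Hle : forall k, Rabs (D k) <= v k).
  { intros k. unfold D, v. rewrite Rabs_mult, (Rabs_pos_eq (Wk k)) by auto.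
    specialize (Hg (z k) x (Hz k) Hx). pose proof (abs_amgm (z k - x) s Hs). specialize (HW k).
    apply Rle_trans with (Wk k * ((1 + Rabs (z k - x) / d) * w)). apply Rmult_le_compat_l; auto.
    replace (w * (1 + s / (2 * d)) * Wk k + w / (2 * d * s) * (Wk k * (z k - x) ^ 2))
      with (Wk k * ((1 + ((z k - x) ^ 2 / s + s) / 2 / d) * w)) by (field; lra).
    apply Rmult_le_compat_l; auto. apply Rmult_le_compat_r; auto. apply Rplus_le_compat_l.
    unfold Rdiv at 1 3. apply Rmult_le_compat_r. left; apply Rinv_0_lt_compat; lra. exact H. }
  assert (Hexa : ex_series (fun k => Rabs (D k))).
  { apply (@ex_series_le R_AbsRing R_CompleteNormedModule) with v.
    intros k. change norm with Rabs. simpl. rewrite Rabs_Rabsolu. apply Hle. eexists; eauto. }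
  eapply Rle_trans. apply Rmult_le_compat_l. left; apply Rinv_0_lt_compat; auto. apply Series_Rabs; auto.
  eapply Rle_trans. apply Rmult_le_compat_l. left; apply Rinv_0_lt_compat; auto. apply Series_le.
  intros k; split; [apply Rabs_pos| apply Hle]. eexists; eauto.
  rewrite (Series_ext (fun k => v k) v) by reflexivity. rewrite (is_series_unique _ _ Hv).
  right. field. repeat split; lra.
Qed.

Lemma sqrt_mult_any a b : 0 < b -> sqrt a * sqrt b = sqrt (a * b).
Proof.
  intros Hb. destruct (Rle_dec 0 a).
  - rewrite sqrt_mult; auto; lra.
  - rewrite (sqrt_neg_0 a), (sqrt_neg_0 (a * b)) by nra. ring.
Qed.

Theorem theorem7 (alpha mu : R) (g : R -> R) (n : nat) (x : R) :
  0 <= alpha -> 0 <= mu -> unif_cont_nonneg g -> (0 < n)%nat -> 0 <= x ->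
  Rabs (T_op alpha mu n g x - g x) <=
  (1 + sqrt (/ INR n * x * (4 * x ^ 3 * alpha ^ 2 + 4 * x * alpha + INR n)
             + 2 * mu * x * (e_mu mu (- (INR n * x)) / e_mu mu (INR n * x))))
  * real (omega g (/ sqrt (INR n))).
Proof.
  intros Ha Hmu Hg Hn Hx.
  assert (HnR : 0 < INR n) by (apply lt_0_INR; lia).
  assert (Hsn : 0 < sqrt (INR n)) by (apply sqrt_lt_R0; auto).
  assert (Hd : 0 < / sqrt (INR n)) by (apply Rinv_0_lt_compat; auto).
  set (u := alpha * x ^ 2). set (y := INR n * x).
  assert (Hu : 0 <= u) by (unfold u; apply Rmult_le_pos; auto; apply pow2_ge_0).
  assert (Hy : 0 <= y) by (unfold y; apply Rmult_le_pos; lra).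
  set (Ee := e_mu mu y). set (Em := e_mu mu (- y)).
  assert (HE : 1 <= Ee).
  { pose proof (is_series_ge0 _ _ (Bs_is mu y Hmu) (fun k => Bs_ge0 mu y k Hmu Hy)).
    unfold Bs, gamma_mu in H. simpl in H. unfold Ee. lra. }
  pose proof (exp_pos u) as Hexp.
  destruct (omega_fin g (/ sqrt (INR n)) Hg Hd) as [w [Hw [Hw0 Hwb]]].
  rewrite Hw. simpl real.
  pose proof (chain g _ w Hd Hwb) as Hch.
  unfold T_op.
  rewrite (Series_ext _ (fun k => W u mu y k * g (cp mu k / INR n))).
  2:{ intros k. rewrite W_eq by auto. reflexivity. }
  fold u y. fold Ee.
  set (L1 := 2 * u * exp u * Ee + exp u * (y * Ee)).
  set (L2 := 2 * u * (2 * u * exp u + 2 * exp u) * Ee + 2 * (2 * u * exp u * (y * Ee))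
    + exp u * (y * (y * Ee + Ee + 2 * mu * Em))).
  assert (H1 : is_series (fun k => W u mu y k * (cp mu k / INR n)) (/ INR n * L1)).
  { eapply is_series_extR. apply (is_series_scalR _ (/ INR n) _ (W_is1 u mu y Hmu Hu Hy)).
    intros k; cbv beta; field; lra. reflexivity. }
  assert (H2 : is_series (fun k => W u mu y k * (cp mu k / INR n) ^ 2) (/ INR n ^ 2 * L2)).
  { eapply is_series_extR. apply (is_series_scalR _ (/ INR n ^ 2) _ (W_is2 u mu y Hmu Hu Hy)).
    intros k; cbv beta; field; lra. reflexivity. }
  eapply Rle_trans.
  apply (main_ineq (W u mu y) (fun k => cp mu k / INR n) g x (exp u * Ee) (/ INR n * L1) (/ INR n ^ 2 * L2) w (/ sqrt (INR n)));
    auto.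
  - intros; apply W_ge0; auto.
  - intros k. apply Rcomplements.Rdiv_le_0_compat; auto. pose proof (cp_ge mu k Hmu); pose proof (pos_INR k); lra.
  - apply Rmult_lt_0_compat; lra.
  - apply W_is0; auto.
  - right. f_equal. f_equal. unfold Rdiv at 1. rewrite Rinv_inv, sqrt_mult_any by auto. f_equal.
    unfold L1, L2, u, y, Em, Ee. field. unfold Ee, u in *. repeat split; lra.
Qed.
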